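(* Let $p\in[2,3)$, $N\in\mathbb N$, $d,n\ge1$, let $f=(f_1,\dots,f_d)$ be vector fields on $\mathbb R^n$ of class $C^2_b$, let $\mathbf w=(\mathbf w_0,\dots,\mathbf w_N)$ be a time series in $\mathbb R^d$, and let $\mathbf x$ solve $\mathbf x_{k+1}=\mathbf x_k+\sum_{\mu=1}^df_\mu(\mathbf x_k)(\mathbf w^\mu_{k+1}-\mathbf w^\mu_k)$, $\mathbf x_0=\xi\in\mathbb R^n$. Define for $0\le k<l\le N$ \[ I_{k,l}\coloneqq\mathbf x_{k,l}-\sum_{\mu=1}^df_\mu(\mathbf x_k)\mathbf w^\mu_{k,l},\qquad J^\mu_{k,l}\coloneqq f_\mu(\mathbf x_l)-f_\mu(\mathbf x_k)-\sum_{\nu=1}^dDf_\mu(\mathbf x_k)f_\nu(\mathbf x_k)\mathbf w^\nu_{k,l}, \] where $\mathbf x_{k,l}=\mathbf x_l-\mathbf x_k$, $\mathbf w_{k,l}=\mathbf w_l-\mathbf w_k$. Then for all $0\le k<l\le N$, \[ \max_{\mu=1,\dots,d}\|J^\mu\|_{p/2;[k,l]}\le 2^{1-2/p}\|f\|_{C^2_b}\Big(\|I\|^{p/2}_{p/2;[k,l]}+\tfrac12\|\mathbf x\|^p_{p;[k,l]}\Big)^{2/p}. \]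
   Context: $\mathbb R^n$ carries a fixed norm and derivatives use operator norms; $\|f\|_{C^2_b}\coloneqq\max_\mu\max_{j=1,2}\|D^jf_\mu\|_\infty$. $\mathcal S_{k,l}$ is the set of increasing integer sequences $s=(s_0=k<\dots<s_{m+1}=l)$, $\#s=m$; for a time series $\|\mathbf x\|_{q;[k,l]}\coloneqq(\max_s\sum_{j=0}^{\#s}|\mathbf x_{s_{j+1}}-\mathbf x_{s_j}|^q)^{1/q}$, and for a triangular array $(\Xi_{k,l})_{k<l}$, $\|\Xi\|_{q;[k,l]}\coloneqq(\max_s\sum_{j=0}^{\#s}|\Xi_{s_j,s_{j+1}}|^q)^{1/q}$. *)

(* Defs.v *)
(* R : realType; R^n is 'rV[R]_n. *)
From HB Require Import structures.
From mathcomp Require Import all_boot all_order all_algebra.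
From mathcomp Require Import all_classical all_reals all_analysis.
Set Implicit Arguments. Unset Strict Implicit. Unset Printing Implicit Defensive.
Import Order.TTheory GRing.Theory Num.Theory.
Import numFieldNormedType.Exports.
Local Open Scope classical_set_scope.
Local Open Scope ring_scope.

Definition is_norm (R : realType) (n : nat) (nrm : 'rV[R]_n -> R) : Prop :=
  [/\ forall x, nrm x = 0 -> x = 0,
      forall (a : R) x, nrm (a *: x) = `|a| * nrm x &
      forall x y, nrm (x + y) <= nrm x + nrm y].

Definition D1norm (R : realType) (n : nat) (nrm : 'rV[R]_n -> R)
    (g : 'rV[R]_n -> 'rV[R]_n) : R :=
  sup [set r | exists x v, nrm v <= 1 /\ r = nrm (derive g x v)].

Definition D2norm (R : realType) (n : nat) (nrm : 'rV[R]_n -> R)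
    (g : 'rV[R]_n -> 'rV[R]_n) : R :=
  sup [set r | exists x u v, [/\ nrm u <= 1, nrm v <= 1 &
         r = nrm (derive (fun y => derive g y v) x u)]].

Definition C2b (R : realType) (n : nat) (nrm : 'rV[R]_n -> R)
    (g : 'rV[R]_n -> 'rV[R]_n) : Prop :=
  [/\ forall x, differentiable g x,
      forall v x, differentiable (fun y => derive g y v) x,
      forall u v, continuous (fun x => derive (fun y => derive g y v) x u),
      exists M, forall x v, nrm v <= 1 -> nrm (derive g x v) <= M &
      exists M, forall x u v, nrm u <= 1 -> nrm v <= 1 ->
         nrm (derive (fun y => derive g y v) x u) <= M].

Definition C2b_norm (R : realType) (n d : nat) (nrm : 'rV[R]_n -> R)
    (f : 'I_d -> 'rV[R]_n -> 'rV[R]_n) : R :=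
  \big[Num.max/0]_(mu < d) Num.max (D1norm nrm (f mu)) (D2norm nrm (f mu)).

(* partition s = k :: t with k = s_0 < s_1 < ... < s_{m+1} = l;
   sum_j Xi(s_j, s_{j+1})^q *)
Definition part_sum (R : realType) (q : R) (Xi : nat -> nat -> R)
    (k : nat) (t : seq nat) : R :=
  \sum_(ij <- zip (k :: t) t) (Xi ij.1 ij.2) `^ q.

Definition is_part (k l : nat) (t : seq nat) : Prop :=
  path ltn k t /\ last k t = l.

Definition pvar (R : realType) (q : R) (Xi : nat -> nat -> R) (k l : nat) : R :=
  (sup [set part_sum q Xi k t | t in is_part k l]) `^ q^-1.

Definition euler_sol (R : realType) (n d N : nat)
    (f : 'I_d -> 'rV[R]_n -> 'rV[R]_n) (w : nat -> 'I_d -> R)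
    (xi : 'rV[R]_n) (x : nat -> 'rV[R]_n) : Prop :=
  x 0%N = xi /\
  forall k, (k < N)%N ->
    x k.+1 = x k + \sum_(mu < d) (w k.+1 mu - w k mu) *: f mu (x k).

Definition Iarr (R : realType) (n d : nat)
    (f : 'I_d -> 'rV[R]_n -> 'rV[R]_n) (w : nat -> 'I_d -> R)
    (x : nat -> 'rV[R]_n) (k l : nat) : 'rV[R]_n :=
  x l - x k - \sum_(mu < d) (w l mu - w k mu) *: f mu (x k).

Definition Jarr (R : realType) (n d : nat)
    (f : 'I_d -> 'rV[R]_n -> 'rV[R]_n) (w : nat -> 'I_d -> R)
    (x : nat -> 'rV[R]_n) (mu : 'I_d) (k l : nat) : 'rV[R]_n :=
  f mu (x l) - f mu (x k)
  - \sum_(nu < d) (w l nu - w k nu) *: derive (f mu) (x k) (f nu (x k)).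

(* Main.v *)
Require Import Defs.
From HB Require Import structures.
From mathcomp Require Import all_boot all_order all_algebra.
From mathcomp Require Import all_classical all_reals all_analysis.
From mathcomp Require Import lra ring.
Import Order.TTheory GRing.Theory Num.Theory.
Import numFieldNormedType.Exports.
Local Open Scope classical_set_scope.
Local Open Scope ring_scope.
Set Implicit Arguments. Unset Strict Implicit.



Lemma nrm0 (R : realType) n (nrm : 'rV[R]_n -> R) : is_norm nrm -> nrm 0 = 0.
Proof. by case=> _ hZ _; rewrite -(scale0r (0 : 'rV[R]_n)) hZ normr0 mul0r. Qed.

Lemma nrmN (R : realType) n (nrm : 'rV[R]_n -> R) : is_norm nrm ->
  forall v, nrm (- v) = nrm v.
Proof. by case=> _ hZ _ v; rewrite -scaleN1r hZ normrN normr1 mul1r. Qed.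

Lemma nrm_ge0 (R : realType) n (nrm : 'rV[R]_n -> R) : is_norm nrm ->
  forall v, 0 <= nrm v.
Proof.
move=> hn v; have := hn; case=> _ _ hT.
have := hT v (- v); rewrite subrr nrm0 // nrmN //.
lra.
Qed.

Lemma nrm_sum (R : realType) n (nrm : 'rV[R]_n -> R) (I : Type) (r : seq I)
  (F : I -> 'rV[R]_n) : is_norm nrm ->
  nrm (\sum_(i <- r) F i) <= \sum_(i <- r) nrm (F i).
Proof.
move=> hn; elim: r => [|a r IH]; first by rewrite !big_nil nrm0.
rewrite !big_cons; apply: le_trans (lerD (lexx _) IH).
by case: hn => _ _ ->.
Qed.

Lemma nrm_lip (R : realType) n (nrm : 'rV[R]_n -> R) : is_norm nrm ->
  exists K, 0 <= K /\ forall v, nrm v <= K * `|v|.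
Proof.
move=> hn; exists (\sum_(j < n) nrm 'e_j); split.
  by apply: sumr_ge0 => j _; apply: nrm_ge0.
move=> v; rewrite {1}(row_sum_delta v).
apply: le_trans (@nrm_sum _ _ _ _ _ _ hn) _; rewrite big_distrl /=; apply: ler_sum => j _.
have := hn; case=> _ hZ _; rewrite hZ [X in _ <= X]mulrC.
apply: ler_wpM2r; first exact: nrm_ge0.
rewrite /Num.norm /= mx_normrE.
by apply: le_trans (le_bigmax _ (fun ij : 'I_1 * 'I_n => `|v ij.1 ij.2|) (0, j)).
Qed.



Lemma cont_eps (R : realType) n (G : R -> 'rV[R]_n) t : {for t, continuous G} ->
  forall e, 0 < e -> exists2 d, 0 < d & forall s, `|t - s| < d -> `|G t - G s| <= e.
Proof.
move=> /cvgrPdist_le Gc e e0.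
have := Gc e e0. move=> /nbhs_ballP [d d0 hd]. exists d => // s hs.
Qed.

Lemma nrm_tri (R : realType) n (nrm : 'rV[R]_n -> R) : is_norm nrm ->
  forall u v, nrm (u + v) <= nrm u + nrm v.
Proof. by case. Qed.

Lemma nrm_tri3 (R : realType) n (nrm : 'rV[R]_n -> R) : is_norm nrm ->
  forall u v w, nrm (u - w) <= nrm (u - v) + nrm (v - w).
Proof.
move=> hn u v w; have := nrm_tri hn (u - v) (v - w).
by rewrite addrA subrK.
Qed.

Lemma nrmZ (R : realType) n (nrm : 'rV[R]_n -> R) : is_norm nrm ->
  forall a v, nrm (a *: v) = `|a| * nrm v.
Proof. by case. Qed.

Lemma mvi (R : realType) n (nrm : 'rV[R]_n -> R) (G D : R -> 'rV[R]_n)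
  (beta : R -> R) (a b : R) :
  is_norm nrm -> a <= b -> continuous G ->
  (forall t, a <= t -> t < b -> forall e, 0 < e -> exists2 d, 0 < d &
     forall s, 0 < s -> s < d -> nrm (G (t + s) - G t - s *: D t) <= e * s) ->
  (forall t, a <= t -> t < b -> forall s, 0 < s ->
     nrm (D t) * s <= beta (t + s) - beta t) ->
  nrm (G b - G a) <= beta b - beta a.
Proof.
move=> hn hab Gc HD Hb.
have [K [K0 HK]] := nrm_lip hn.
apply/ler_addgt0Pr => e e0.
pose eps := e / (b - a + 1).
have ba1 : 0 < b - a + 1 by lra.
have eps0 : 0 < eps by rewrite divr_gt0.
pose S := [set t | (a <= t /\ t <= b) /\
   nrm (G t - G a) <= beta t - beta a + eps * (t - a)].
have Sa : S a by split; [lra | rewrite !subrr nrm0 // mulr0 addr0].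
have ubS : ubound S b by move=> t [[_ ?] _].
have hsS : has_sup S by split; [exists a | exists b].
pose c := sup S.
have ac : a <= c by exact: sup_upper_bound.
have cb : c <= b by apply: ge_sup => //; exists a.
have mono : forall t, a <= t -> t <= c -> beta t <= beta c.
  move=> t at1; rewrite le_eqVlt => /orP [/eqP -> //| tc].
  have := Hb t at1 (lt_le_trans tc cb) (c - t); rewrite subr_gt0 => /(_ tc).
  rewrite addrCA subrr addr0 => h.
  have : 0 <= nrm (D t) * (c - t) by rewrite mulr_ge0 ?nrm_ge0 // subr_ge0 ltW.
  lra.
have Sc : S c.
  split; [by split|]; rewrite leNgt; apply/negP => hlt.
  pose eta := nrm (G c - G a) - (beta c - beta a + eps * (c - a)).
  have eta0 : 0 < eta by rewrite /eta subr_gt0.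
  have [d d0 Hd] := @cont_eps _ _ G c (Gc c) (eta / 2 / (K + 1)) ltac:(rewrite !divr_gt0 //; lra).
  have [t St ht] := sup_adherent d0 hsS.
  have tc : t <= c by exact: sup_upper_bound.
  have h1 : nrm (G c - G t) <= eta / 2.
    apply: le_trans (HK _) _.
    have := Hd t ltac:(rewrite ger0_norm ?subr_ge0 //; rewrite -/c in ht; lra).
    move=> h2; have : K * `|G c - G t| <= K * (eta / 2 / (K + 1)).
      by apply: ler_wpM2l.
    move=> h3; apply: le_trans h3 _.
    have K1 : 0 < K + 1 by lra.
    rewrite mulrA ler_pdivrMr // mulrDr mulr1 [K * _]mulrC lerDl; lra.
  have h2 := nrm_tri3 hn (G c) (G t) (G a).
  case: St => [[at1 tb] h4].
  have h5 := mono t at1 tc.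
  have h6 : eps * (t - a) <= eps * (c - a) by apply: ler_wpM2l; lra.
  rewrite /eta in h1; lra.
have cb' : c = b.
  apply/eqP; rewrite eq_le cb /= leNgt; apply/negP => hcb.
  have [d d0 Hd] := HD c ac hcb eps eps0.
  pose s := Num.min (d / 2) (b - c).
  have s0 : 0 < s by rewrite lt_min divr_gt0 //= subr_gt0.
  have sd : s < d by rewrite gt_min; apply/orP; left; lra.
  have sbc : s <= b - c by rewrite ge_min lexx orbT.
  have : S (c + s).
    split; first by split; lra.
    have h1 := Hd s s0 sd.
    have h2 := Hb c ac hcb s s0.
    have h3 := nrm_tri hn (G (c + s) - G c - s *: D c) (s *: D c).
    rewrite subrK nrmZ // (ger0_norm (ltW s0)) in h3.
    have h4 := nrm_tri3 hn (G (c + s)) (G c) (G a).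
    case: Sc => _ h5.
    have -> : eps * (c + s - a) = eps * (c - a) + eps * s by ring.
    lra.
  move=> /sup_upper_bound => /(_ hsS); rewrite -/c; lra.
case: Sc; rewrite cb' => _ h.
apply: le_trans h _; rewrite lerD2l /eps.
rewrite mulrAC ler_pdivrMr //; rewrite ler_pM2l //; lra.
Qed.



Lemma der_eps (R : realType) n (nrm : 'rV[R]_n -> R) (g : 'rV[R]_n -> 'rV[R]_n) z h :
  is_norm nrm -> derivable g z h ->
  forall e, 0 < e -> exists2 d, 0 < d &
    forall s, 0 < s -> s < d -> nrm (g (z + s *: h) - g z - s *: derive g z h) <= e * s.
Proof.
move=> hn hd e e0.
have [K [K0 HK]] := nrm_lip hn.
have K1 : 0 < K + 1 by lra.
move: hd => /cvgrPdist_le /(_ (e / (K + 1))) [].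
  by rewrite divr_gt0.
move=> d /= d0 hd; exists d => // s s0 sd.
have := hd s; rewrite /= sub0r normrN gtr0_norm // => /(_ sd (negbT (gt_eqF s0))).
rewrite -/(derive g z h) => hq.
have -> : g (z + s *: h) - g z - s *: derive g z h =
    s *: (s^-1 *: (g (s *: h + z) - g z) - derive g z h).
  by rewrite scalerBr scalerA mulfV ?gt_eqF // scale1r [s *: h + z]addrC.
rewrite nrmZ // gtr0_norm // mulrC ler_pM2r //.
apply: le_trans (HK _) _.
rewrite -normrN opprB.
have : K * `|derive g z h - s^-1 *: (g (s *: h + z) - g z)| <= K * (e / (K + 1)).
  by apply: ler_wpM2l.
move=> h1; apply: le_trans h1 _.
rewrite mulrA ler_pdivrMr // mulrDr mulr1 [K * _]mulrC lerDl; lra.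
Qed.

Lemma derive_scal (R : realType) n (g : 'rV[R]_n -> 'rV[R]_n) z a v :
  differentiable g z -> derive g z (a *: v) = a *: derive g z v.
Proof. by move=> dg; rewrite !deriveE // linearZ. Qed.

Lemma derive_sumr (R : realType) n d (g : 'rV[R]_n -> 'rV[R]_n) z (F : 'I_d -> 'rV[R]_n) :
  differentiable g z -> derive g z (\sum_(i < d) F i) = \sum_(i < d) derive g z (F i).
Proof.
move=> dg; rewrite deriveE // linear_sum; apply: eq_bigr => i _.
by rewrite deriveE.
Qed.

Lemma nrm_eq0 (R : realType) n (nrm : 'rV[R]_n -> R) : is_norm nrm ->
  forall v, nrm v = 0 -> v = 0.
Proof. by case. Qed.

Lemma nrm_decomp (R : realType) n (nrm : 'rV[R]_n -> R) : is_norm nrm ->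
  forall v, exists u, nrm u <= 1 /\ v = nrm v *: u.
Proof.
move=> hn v; have [v0|v0] := eqVneq (nrm v) 0.
  by exists 0; rewrite nrm0 // scaler0 (nrm_eq0 hn v0); split.
exists ((nrm v)^-1 *: v); split.
  by rewrite nrmZ // ger0_norm ?invr_ge0 ?nrm_ge0 // mulVf.
by rewrite scalerA mulfV // scale1r.
Qed.

Lemma B1 (R : realType) n (nrm : 'rV[R]_n -> R) (g : 'rV[R]_n -> 'rV[R]_n) :
  is_norm nrm -> C2b nrm g -> forall z v, nrm (derive g z v) <= D1norm nrm g * nrm v.
Proof.
move=> hn [dg ddg cont [M HM] [M2 HM2]] z v.
have hs : has_sup [set r | exists x v, nrm v <= 1 /\ r = nrm (derive g x v)].
  split; first by exists (nrm (derive g 0 0)), 0, 0; rewrite nrm0.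
  by exists M => r [x [w [w1 ->]]]; apply: HM.
set a := nrm v.
have [u [u1 hv]] := nrm_decomp hn v; rewrite -/a in hv.
rewrite [in X in X <= _]hv.
rewrite derive_scal // nrmZ // ger0_norm ?nrm_ge0 // mulrC.
apply: ler_wpM2r; first exact: nrm_ge0.
by apply: sup_upper_bound => //; exists z, u.
Qed.

Lemma B2 (R : realType) n (nrm : 'rV[R]_n -> R) (g : 'rV[R]_n -> 'rV[R]_n) :
  is_norm nrm -> C2b nrm g -> forall z v,
  nrm (derive (fun y => derive g y v) z v) <= D2norm nrm g * nrm v ^+ 2.
Proof.
move=> hn [dg ddg cont [M HM] [M2 HM2]] z v.
have hs : has_sup [set r | exists x u v, [/\ nrm u <= 1, nrm v <= 1 &
         r = nrm (derive (fun y => derive g y v) x u)]].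
  split; first by exists (nrm (derive (fun y => derive g y 0) 0 0)), 0, 0, 0; rewrite nrm0.
  by exists M2 => r [x [u [w [u1 w1 ->]]]]; apply: HM2.
set a := nrm v.
have [u [u1 hv]] := nrm_decomp hn v; rewrite -/a in hv.
rewrite [in X in X <= _]hv.
have -> : (fun y => derive g y (a *: u)) = a \*: (fun y => derive g y u).
  by apply: funext => y /=; rewrite derive_scal.
rewrite deriveZ; last exact: diff_derivable.
rewrite derive_scal // scalerA !nrmZ // ger0_norm ?mulr_ge0 ?nrm_ge0 //.
rewrite mulrC expr2.
apply: ler_wpM2r; first by rewrite mulr_ge0 /a ?nrm_ge0.
by apply: sup_upper_bound => //; exists z, u, u.
Qed.



Lemma aff_cont (R : realType) n (x0 h : 'rV[R]_n) : continuous (fun t : R => x0 + t *: h).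
Proof. move=> t. apply: cvgD. exact: cvg_cst. apply: cvgZl. exact: cvg_id. Qed.

Lemma vec_id (R : realType) n (A B c P : 'rV[R]_n) (u s : R) :
  (A - (u + s) *: c) - (B - u *: c) - s *: (P - c) = A - B - s *: P.
Proof. by apply/rowP => i; rewrite !mxE; ring. Qed.

Lemma taylor2 (R : realType) n (nrm : 'rV[R]_n -> R) (g : 'rV[R]_n -> 'rV[R]_n) :
  is_norm nrm -> C2b nrm g -> forall x0 h,
  nrm (g (x0 + h) - g x0 - derive g x0 h) <= 2^-1 * (D2norm nrm g * nrm h ^+ 2).
Proof.
move=> hn hC x0 h.
have [dg ddg _ _ _] := hC.
set M := D2norm nrm g * nrm h ^+ 2.
have HM : forall z, nrm (derive (fun y => derive g y h) z h) <= M by move=> z; exact: B2.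
have M0 : 0 <= M by apply: le_trans (HM x0); exact: nrm_ge0.
pose psi t := derive g (x0 + t *: h) h.
have step1 : forall t, 0 <= t -> nrm (psi t - psi 0) <= M * t.
  move=> t t0.
  have := @mvi R n nrm psi (fun t => derive (fun y => derive g y h) (x0 + t *: h) h)
     (fun t => M * t) 0 t hn t0.
  rewrite mulr0 subr0; apply.
  - move=> u.
    have hc := (@continuous_comp _ _ _ (fun t : R => x0 + t *: h) (fun y => derive g y h) u (@aff_cont R n x0 h u) (differentiable_continuous (ddg h _))). exact: hc.
  - move=> u _ _ e e0.
    have [d d0 Hd] := @der_eps R n nrm (fun y => derive g y h) (x0 + u *: h) h hn (diff_derivable (ddg h _)) e e0.
    exists d; first exact: d0.
    move=> s s0 sd; have := Hd s s0 sd.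
    have E : psi (u + s) = derive g (x0 + u *: h + s *: h) h by rewrite /psi scalerDl addrA.
    by rewrite E.
  - move=> u _ _ s s0.
    by rewrite mulrDr addrAC subrr add0r mulrC [M * s]mulrC ler_wpM2l // ltW.
pose phi t := g (x0 + t *: h).
pose chi t := phi t - t *: psi 0.
have := @mvi R n nrm chi (fun t => psi t - psi 0)
     (fun t => 2^-1 * M * (t * t)) 0 1 hn ler01.
have -> : chi 1 - chi 0 = g (x0 + h) - g x0 - derive g x0 h.
  by rewrite /chi /phi /psi !scale1r !scale0r !addr0 subr0 addrAC.
have -> : 2^-1 * M * (1 * 1) - 2^-1 * M * (0 * 0) = 2^-1 * M by ring.
apply.
- move=> u; apply: cvgB; last by apply: cvgZl; exact: cvg_id.
  exact: (@continuous_comp _ _ _ (fun t : R => x0 + t *: h) g u (@aff_cont R n x0 h u) (differentiable_continuous (dg _))).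
- move=> u _ _ e e0.
  have [d d0 Hd] := @der_eps R n nrm g (x0 + u *: h) h hn (diff_derivable (dg _)) e e0.
  exists d; first exact: d0.
    move=> s s0 sd; have := Hd s s0 sd.
  have -> : chi (u + s) - chi u - s *: (psi u - psi 0) =
     g (x0 + u *: h + s *: h) - g (x0 + u *: h) - s *: derive g (x0 + u *: h) h.
    rewrite /chi /phi /psi scalerDl addrA; exact: vec_id.
  exact.
- move=> u u0 _ s s0.
  apply: le_trans (_ : M * u * s <= _).
    by apply: ler_wpM2r; [exact: ltW | exact: step1].
  rewrite -subr_ge0.
  have -> : 2^-1 * M * ((u + s) * (u + s)) - 2^-1 * M * (u * u) - M * u * s
     = 2^-1 * M * (s * s) by field.
  have s0' := ltW s0.
  apply: mulr_ge0; [apply: mulr_ge0; [by rewrite invr_ge0 ler0n | exact: M0] | exact: mulr_ge0].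
Qed.



Lemma vec_id2 (R : realType) n (A B P Q : 'rV[R]_n) :
  A - B - (P - Q) = (A - B - P) + Q.
Proof. by apply/rowP => i; rewrite !mxE; ring. Qed.

Lemma J_bound (R : realType) n d (nrm : 'rV[R]_n -> R) (f : 'I_d -> 'rV[R]_n -> 'rV[R]_n)
  (w : nat -> 'I_d -> R) (x : nat -> 'rV[R]_n) mu a b :
  is_norm nrm -> (forall mu, C2b nrm (f mu)) ->
  nrm (Jarr f w x mu a b) <= C2b_norm nrm f *
     (nrm (Iarr f w x a b) + 2^-1 * nrm (x b - x a) ^+ 2).
Proof.
move=> hn hC.
have hCm := hC mu; have [dg _ _ _ _] := hCm.
set C := C2b_norm nrm f.
have C1 : D1norm nrm (f mu) <= C.
  apply: le_trans (le_bigmax _ _ mu); by rewrite le_max lexx.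
have C2 : D2norm nrm (f mu) <= C.
  apply: le_trans (le_bigmax _ _ mu); by rewrite le_max lexx orbT.
set z := x a; set h := x b - x a; set I := Iarr f w x a b.
have hs : \sum_(nu < d) (w b nu - w a nu) *: derive (f mu) z (f nu z) =
    derive (f mu) z h - derive (f mu) z I.
  rewrite -(eq_bigr _ (fun nu _ => derive_scal _ _ (dg z))).
  rewrite -derive_sumr // !deriveE // -linearB /=.
  by congr ('d _ _ _); rewrite /I /Iarr /h -/z opprB addrC subrK.
rewrite /Jarr -/z hs vec_id2.
have -> : x b = z + h by rewrite /h /z addrC subrK.
apply: le_trans (nrm_tri hn _ _) _.
apply: le_trans (lerD (taylor2 hn hCm z h) (B1 hn hCm z I)) _.
rewrite mulrDr addrC; apply: lerD.
  by apply: ler_wpM2r => //; exact: nrm_ge0.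
rewrite [X in _ <= X]mulrCA; apply: ler_wpM2l; first by rewrite invr_ge0 ler0n.
by apply: ler_wpM2r => //; rewrite exprn_ge0 // nrm_ge0.
Qed.

Lemma D1_ge0 (R : realType) n (nrm : 'rV[R]_n -> R) (g : 'rV[R]_n -> 'rV[R]_n) :
  is_norm nrm -> C2b nrm g -> 0 <= D1norm nrm g.
Proof.
move=> hn [dg ddg cont [M HM] [M2 HM2]].
have hs : has_sup [set r | exists x v, nrm v <= 1 /\ r = nrm (derive g x v)].
  split; first by exists (nrm (derive g 0 0)), 0, 0; rewrite nrm0.
  by exists M => r [x [w [w1 ->]]]; apply: HM.
apply: le_trans (nrm_ge0 hn (derive g 0 0)) _.
by apply: sup_upper_bound => //; exists 0, 0; rewrite nrm0.
Qed.



Lemma term_le_sum (R : realType) (F : nat -> R) m j :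
  (forall i, 0 <= F i) -> (j < m)%N -> F j <= \sum_(i < m) F i.
Proof.
move=> F0 hj; rewrite (bigD1 (Ordinal hj)) //= lerDl.
by apply: sumr_ge0 => i _.
Qed.

Definition SS (R : realType) (q : R) (Xi : nat -> nat -> R) l :=
  \sum_(a < l.+1) \sum_(b < l.+1) Xi a b `^ q.

Lemma SS_ge (R : realType) (q : R) Xi l a b : (a <= l)%N -> (b <= l)%N ->
  Xi a b `^ q <= SS q Xi l.
Proof.
move=> al bl; rewrite /SS.
apply: le_trans (@term_le_sum R (fun a => \sum_(b < l.+1) Xi a b `^ q) l.+1 a _ _).
- apply: (@term_le_sum R (fun b => Xi a b `^ q)) => // i; exact: powR_ge0.
- by move=> i; apply: sumr_ge0 => j _; exact: powR_ge0.
- by [].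
Qed.

Lemma SS_ge0 (R : realType) (q : R) Xi l : 0 <= SS q Xi l.
Proof. by apply: sumr_ge0 => a _; apply: sumr_ge0 => b _; exact: powR_ge0. Qed.

Lemma part_sum_ge0 (R : realType) (q : R) Xi k t : 0 <= part_sum q Xi k t.
Proof. by apply: sumr_ge0 => ij _; exact: powR_ge0. Qed.

Lemma part_ind (R : realType) (q : R) Xi l : forall t k, path ltn k t ->
  (k + size t <= last k t)%N /\
  ((last k t <= l)%N -> part_sum q Xi k t <= (size t)%:R * SS q Xi l).
Proof.
elim => [|j t IH] k /=.
  by move=> _; split; [rewrite addn0 | move=> _; rewrite /part_sum big_nil mul0r].
move=> /andP [kj pt]; have [h1 h2] := IH j pt; split.
  by apply: leq_trans h1; rewrite addnS ltn_add2r.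
move=> hl; rewrite /part_sum /= big_cons /= -/(part_sum q Xi j t).
rewrite -addn1 natrD mulrDl mul1r addrC; apply: lerD; first exact: h2.
apply: SS_ge; last by apply: leq_trans hl; apply: leq_trans h1; rewrite leq_addr.
by apply: leq_trans hl; apply: leq_trans h1; apply: leq_trans (ltnW kj) (leq_addr _ _).
Qed.

Lemma part_l (k l : nat) : (k < l)%N -> is_part k l [:: l].
Proof. by move=> kl; split => //=; rewrite kl. Qed.

Lemma hs_part (R : realType) (q : R) Xi k l : (k < l)%N ->
  has_sup [set part_sum q Xi k t | t in is_part k l].
Proof.
move=> kl; split; first by exists (part_sum q Xi k [:: l]), [:: l] => //; exact: part_l.
exists (l%:R * SS q Xi l) => _ [t [pt lt] <-].
have [h1 h2] := part_ind q Xi l pt.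
apply: le_trans (h2 _) _; first by rewrite lt.
apply: ler_wpM2r; first exact: SS_ge0.
by rewrite ler_nat; apply: leq_trans (leq_addl k _) _; rewrite -lt.
Qed.

Lemma sup_part_ge0 (R : realType) (q : R) Xi k l : (k < l)%N ->
  0 <= sup [set part_sum q Xi k t | t in is_part k l].
Proof.
move=> kl; apply: le_trans (part_sum_ge0 q Xi k [:: l]) _.
by apply: sup_upper_bound; [exact: hs_part | exists [:: l] => //; exact: part_l].
Qed.

Lemma pvar_pow (R : realType) (q : R) Xi k l : (k < l)%N -> q != 0 ->
  pvar q Xi k l `^ q = sup [set part_sum q Xi k t | t in is_part k l].
Proof.
move=> kl q0; rewrite /pvar -powRrM mulVf // powRr1 //; exact: sup_part_ge0.
Qed.

Lemma cvx2 (R : realType) (q a b : R) : 1 <= q -> 0 <= a -> 0 <= b ->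
  (a + b) `^ q <= 2 `^ (q - 1) * (a `^ q + b `^ q).
Proof.
move=> q1 a0 b0.
have H : (2^-1 * a + 2^-1 * b) `^ q <= 2^-1 * a `^ q + 2^-1 * b `^ q.
  rewrite {2 4}(_ : 2^-1 = 1 - 2^-1); last by rewrite {2}(splitr 1) div1r addrK.
  by apply: (convex_powR q1 (Itv01 _ _)) => //=;
    rewrite ?inE/= ?in_itv/= ?a0 ?b0 // ?invr_ge0// invf_le1 ?ler1n.
have -> : a + b = 2 * (2^-1 * a + 2^-1 * b) by field.
rewrite powRM //; last by rewrite addr_ge0 // mulr_ge0 // invr_ge0 ler0n.
have -> : 2 `^ (q - 1) = 2 `^ q * 2^-1.
  by rewrite powRD ?pnatr_eq0 ?implybT // powR_inv1 // ler0n.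
rewrite -mulrA; apply: ler_wpM2l; first exact: powR_ge0.
by rewrite mulrDr.
Qed.

Lemma part_sum_comb (R : realType) (q q' K c : R) (XJ XI XX : nat -> nat -> R) k t :
  (forall a b, XJ a b `^ q <= K * (XI a b `^ q + c * XX a b `^ q')) ->
  part_sum q XJ k t <= K * (part_sum q XI k t + c * part_sum q' XX k t).
Proof.
move=> H; rewrite /part_sum.
apply: le_trans (ler_sum _ (fun ij _ => H ij.1 ij.2)) _.
by rewrite -mulr_sumr big_split /= -mulr_sumr.
Qed.

Unset Implicit Arguments. Set Strict Implicit.


Lemma abstract_main (R : realType) (p C : R) d (XJ : 'I_d -> nat -> nat -> R)
  (XI XX : nat -> nat -> R) (k l : nat) :
  2 <= p -> 0 <= C -> (k < l)%N ->
  (forall mu a b, XJ mu a b `^ (p / 2) <=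
     C `^ (p / 2) * 2 `^ (p / 2 - 1) * (XI a b `^ (p / 2) + 2^-1 * XX a b `^ p)) ->
  \big[Num.max/0]_(mu < d) pvar (p / 2) (XJ mu) k l
  <= 2 `^ (1 - 2 / p) * C *
     ((pvar (p / 2) XI k l) `^ (p / 2) + 2^-1 * (pvar p XX k l) `^ p) `^ (2 / p).
Proof.
move=> p2 C0 kl termwise.
have p0 : 0 < p by lra.
set q := p / 2.
have q1 : 1 <= q by rewrite /q ler_pdivlMr //; lra.
have q0 : 0 < q by lra.
set SI := sup [set part_sum q XI k t | t in is_part k l].
set SX := sup [set part_sum p XX k t | t in is_part k l].
set K := C `^ q * 2 `^ (q - 1).
have K0 : 0 <= K by rewrite mulr_ge0 ?powR_ge0.
have h20 : (0 : R) <= 2^-1 by rewrite invr_ge0 ler0n.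
have SI0 : 0 <= SI by exact: sup_part_ge0.
have SX0 : 0 <= SX by exact: sup_part_ge0.
have B0 : 0 <= SI + 2^-1 * SX by exact: (addr_ge0 SI0 (mulr_ge0 h20 SX0)).
have Hsum : forall mu t, is_part k l t ->
    part_sum q (XJ mu) k t <= K * (SI + 2^-1 * SX).
  move=> mu t pt.
  apply: le_trans (part_sum_comb k t (termwise mu)) _.
  apply: ler_wpM2l; first exact: K0.
  apply: lerD; last (apply: ler_wpM2l; first exact: h20).
  - apply: sup_upper_bound; [exact: hs_part | exists t; [exact: pt | reflexivity]].
  - apply: sup_upper_bound; [exact: hs_part | exists t; [exact: pt | reflexivity]].
have Hsup : forall mu,
  sup [set part_sum q (XJ mu) k t | t in is_part k l]
    <= K * (SI + 2^-1 * SX).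
  move=> mu; apply: ge_sup.
    exists (part_sum q (XJ mu) k [:: l]), [:: l].
      exact: (part_l kl).
    reflexivity.
  by move=> _ [t pt <-]; exact: Hsum.
have EI : pvar q XI k l `^ q = SI := @pvar_pow R q XI k l kl (lt0r_neq0 q0).
have EX : pvar p XX k l `^ p = SX := @pvar_pow R p XX k l kl (lt0r_neq0 p0).
set PI := pvar q XI k l in EI *.
set PX := pvar p XX k l in EX *.
clearbody PI PX.
rewrite EI EX.
have e : q^-1 = 2 / p by rewrite /q invf_div.
apply: bigmax_le.
  apply: mulr_ge0; [apply: mulr_ge0; [exact: powR_ge0 | exact: C0] | exact: powR_ge0].
move=> mu _; rewrite /pvar -/q e.
have p20 : 0 <= 2 / p by rewrite divr_ge0 ?ler0n ?ltW.
apply: le_trans (@ge0_ler_powR R (2 / p) p20 _ _ _ _ (Hsup mu)) _.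
- rewrite nnegrE; exact: sup_part_ge0.
- rewrite nnegrE; exact: (mulr_ge0 K0 B0).
rewrite (powRM _ K0 B0); apply: ler_wpM2r; first exact: powR_ge0.
rewrite /K (powRM _ (powR_ge0 _ _) (powR_ge0 _ _)) -!powRrM.
rewrite (_ : q * (2 / p) = 1); last by rewrite /q; field; lra.
rewrite (_ : (q - 1) * (2 / p) = 1 - 2 / p); last by rewrite /q; field; lra.
rewrite (powRr1 C0) mulrC; exact: lexx.
Qed.

Theorem lemma5p7 (R : realType) (p : R) (N d n : nat)
  (nrm : 'rV[R]_n -> R) (f : 'I_d -> 'rV[R]_n -> 'rV[R]_n)
  (w : nat -> 'I_d -> R) (xi : 'rV[R]_n) (x : nat -> 'rV[R]_n) :
  2 <= p -> p < 3 -> (1 <= d)%N -> (1 <= n)%N ->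
  is_norm nrm ->
  (forall mu, C2b nrm (f mu)) ->
  euler_sol N f w xi x ->
  forall k l : nat, (k < l)%N -> (l <= N)%N ->
  \big[Num.max/0]_(mu < d) pvar (p / 2) (fun a b => nrm (Jarr f w x mu a b)) k l
  <= 2 `^ (1 - 2 / p) * C2b_norm nrm f *
     ((pvar (p / 2) (fun a b => nrm (Iarr f w x a b)) k l) `^ (p / 2)
      + 2^-1 * (pvar p (fun a b => nrm (x b - x a)) k l) `^ p) `^ (2 / p).
Proof.
move=> p2 p3 d1 n1 hn hC _ k l kl lN.
have p0 : 0 < p by lra.
set q := p / 2.
have q1 : 1 <= q by rewrite /q ler_pdivlMr //; lra.
have q0 : 0 < q by lra.
set C := C2b_norm nrm f.
have C0 : 0 <= C.
  apply: (big_ind (fun v => 0 <= v)) => //; first by move=> u v hu hv; rewrite le_max hu.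
  by move=> mu _; rewrite le_max D1_ge0.
set SI := sup [set part_sum q (fun a b => nrm (Iarr f w x a b)) k t | t in is_part k l].
set SX := sup [set part_sum p (fun a b => nrm (x b - x a)) k t | t in is_part k l].
set K := C `^ q * 2 `^ (q - 1).
have K0 : 0 <= K by rewrite mulr_ge0 ?powR_ge0.
have h20 : (0 : R) <= 2^-1 by rewrite invr_ge0 ler0n.
have termwise : forall mu a b, nrm (Jarr f w x mu a b) `^ q <=
    K * (nrm (Iarr f w x a b) `^ q + 2^-1 * nrm (x b - x a) `^ p).
  move=> mu a b.
  have i0 := nrm_ge0 hn (Iarr f w x a b).
  have y0 := nrm_ge0 hn (x b - x a).
  have hy2 : 0 <= 2^-1 * nrm (x b - x a) ^+ 2 by rewrite mulr_ge0 ?exprn_ge0.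
  apply: le_trans (@ge0_ler_powR R q (ltW q0) _ _ _ _ (@J_bound R n d nrm f w x mu a b hn hC)) _.
  - by rewrite nnegrE nrm_ge0.
  - by rewrite nnegrE mulr_ge0 // addr_ge0.
  rewrite powRM //; last by rewrite addr_ge0.
  rewrite /K -mulrA; apply: ler_wpM2l; first exact: powR_ge0.
  apply: le_trans (cvx2 q1 i0 hy2) _; apply: ler_wpM2l; first exact: powR_ge0.
  apply: lerD => //.
  rewrite powRM // ?exprn_ge0 //; apply: ler_pM => //; first exact: powR_ge0.
    by apply: ge1r_powR => //; rewrite invr_gt0 ltr0n /= invf_le1 ?ler1n.
  rewrite -(powR_mulrn _ y0) -powRrM /q.
  by rewrite (_ : 2%:R * (p / 2) = p) //; field.
exact: (@abstract_main R p C d (fun mu a b => nrm (Jarr f w x mu a b))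
   (fun a b => nrm (Iarr f w x a b)) (fun a b => nrm (x b - x a)) k l p2 C0 kl termwise).
Qed.
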